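(* Assume (F1)–(F3), let $\tau\ge0$, $c\ge0$, and suppose $f'(w)<0$ for $w_0\le w<1$. If $w$ is a solution of problem (P) with these $\tau,c$ such that $w'(x)\le0$ for all $x\in\mathbb R$, then $w'(x)<0$ for all $x\in\mathbb R$.
   Context: $f:\mathbb R\to\mathbb R$ is $C^4$ with bounded derivatives and satisfies: (F1) $f(w)>0$ for $0\le w<1$, $f(1)=0$, $f'(1)>-1$; (F2) $f(0)>1$, $f'(0)>0$, and $f(w)>1$ for $0\le w<w_*$ for some $w_*\in(0,1)$; (F3) the equation $f(w)=1-w$ has exactly one solution $w_0$ in $(0,1)$, and $f'(w_0)<-1$; hence $f(w)>1-w$ for $0\le w<w_0$ and $f(w)<1-w$ for $w_0<w<1$. Problem (P) for given $\tau\ge0$, $c\in\mathbb R$: find $w\in C^2(\mathbb R)$ with $w''(x)+cw'(x)+w(x)\big(1-w(x)-f(w(x+c\tau))\big)=0$ for all $x$, and $w(-\infty)=1$, $w(+\infty)=0$. *)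

(* Defs.v *)
From Stdlib Require Import Reals Lra.
Open Scope R_scope.

Definition lim_pinfty (g : R -> R) (l : R) : Prop :=
  forall eps : R, eps > 0 -> exists M : R, forall x : R, x >= M -> Rabs (g x - l) < eps.

Definition lim_minfty (g : R -> R) (l : R) : Prop :=
  forall eps : R, eps > 0 -> exists M : R, forall x : R, x <= M -> Rabs (g x - l) < eps.

Definition bounded_fun (g : R -> R) : Prop := exists B : R, forall x : R, Rabs (g x) <= B.

Definition C4_bounded_derivs (f f1 f2 f3 f4 : R -> R) : Prop :=
  (forall x, derivable_pt_lim f x (f1 x)) /\
  (forall x, derivable_pt_lim f1 x (f2 x)) /\
  (forall x, derivable_pt_lim f2 x (f3 x)) /\
  (forall x, derivable_pt_lim f3 x (f4 x)) /\
  continuity f4 /\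
  bounded_fun f1 /\ bounded_fun f2 /\ bounded_fun f3 /\ bounded_fun f4.

Definition C2_with (w w1 w2 : R -> R) : Prop :=
  (forall x, derivable_pt_lim w x (w1 x)) /\
  (forall x, derivable_pt_lim w1 x (w2 x)) /\
  continuity w2.

Definition solves_P (f : R -> R) (tau c : R) (w w1 w2 : R -> R) : Prop :=
  C2_with w w1 w2 /\
  (forall x, w2 x + c * w1 x + w x * (1 - w x - f (w (x + c * tau))) = 0) /\
  lim_minfty w 1 /\ lim_pinfty w 0.

(* Main.v *)
Require Import Defs.
From Stdlib Require Import Reals Lra ZArith Lia FunctionalExtensionality.
Open Scope R_scope.

Lemma dcont (f f' : R -> R) x : derivable_pt_lim f x (f' x) -> continuity_pt f x.
Proof. intro H. apply derivable_continuous_pt. exists (f' x). exact H. Qed.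

Lemma MVT_gen (f f' : R -> R) x y :
  (forall z, derivable_pt_lim f z (f' z)) ->
  exists z, (x <= z <= y \/ y <= z <= x) /\ f x - f y = f' z * (x - y).
Proof.
  intro Hd. destruct (Rtotal_order x y) as [H|[H|H]].
  - destruct (MVT_cor2 f f' x y H (fun c _ => Hd c)) as [z [E1 E2]].
    exists z. split. left; lra. nra.
  - subst. exists y. split. left; lra. ring.
  - destruct (MVT_cor2 f f' y x H (fun c _ => Hd c)) as [z [E1 E2]].
    exists z. split. right; lra. nra.
Qed.

Lemma uniq_loc (p q r : R -> R) (a b e K : R) :
  a <= e <= b -> 0 <= K -> (b - a) * (1 + K) < 1 ->
  (forall x, derivable_pt_lim p x (q x)) -> (forall x, derivable_pt_lim q x (r x)) ->
  (forall x, a <= x <= b -> Rabs (r x) <= K * (Rabs (p x) + Rabs (q x))) ->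
  p e = 0 -> q e = 0 -> forall x, a <= x <= b -> p x = 0.
Proof.
  intros He HK Hs Hp Hq Hr Hpe Hqe.
  set (V := fun x => Rabs (p x) + Rabs (q x)).
  destruct (continuity_ab_maj V a b) as [m [Hm1 Hm2]]. lra.
  { intros c _. unfold V. apply (continuity_pt_plus (comp Rabs p) (comp Rabs q));
    apply continuity_pt_comp; try apply Rcontinuity_abs.
    apply (dcont p q c (Hp c)). apply (dcont q r c (Hq c)). }
  destruct (MVT_gen p q m e Hp) as [z1 [Hz1 E1]].
  destruct (MVT_gen q r m e Hq) as [z2 [Hz2 E2]].
  rewrite Hpe, Rminus_0_r in E1. rewrite Hqe, Rminus_0_r in E2.
  assert (Hz1' : a <= z1 <= b) by lra. assert (Hz2' : a <= z2 <= b) by lra.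
  assert (A1 : Rabs (q z1) <= V m).
  { generalize (Hm1 z1 Hz1'). unfold V. generalize (Rabs_pos (p z1)). lra. }
  assert (A2 : Rabs (r z2) <= K * V m).
  { generalize (Hm1 z2 Hz2'). specialize (Hr z2 Hz2'). unfold V in *. nra. }
  assert (Hme : Rabs (m - e) <= b - a).
  { apply Rabs_le; lra. }
  assert (B1 : Rabs (p m) <= V m * (b - a)).
  { rewrite E1, Rabs_mult. apply Rmult_le_compat; auto using Rabs_pos. }
  assert (B2 : Rabs (q m) <= K * V m * (b - a)).
  { rewrite E2, Rabs_mult. apply Rmult_le_compat; auto using Rabs_pos. }
  assert (V0 : 0 <= V m) by (unfold V; generalize (Rabs_pos (p m)) (Rabs_pos (q m)); lra).
  assert (Vm : V m <= 0).
  { assert (EV : V m = Rabs (p m) + Rabs (q m)) by reflexivity.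
    assert (V m <= V m * ((b - a) * (1 + K))) by lra.
    assert (0 <= V m * (1 - (b - a) * (1 + K))) by (apply Rmult_le_pos; lra).
    assert (V m * (1 - (b - a) * (1 + K)) <= 0) by lra.
    assert (HH : V m * (1 - (b - a) * (1 + K)) = 0) by lra.
    apply Rmult_integral in HH. lra. }
  intros x Hx. specialize (Hm1 x Hx). unfold V in Hm1, Vm.
  generalize (Rabs_pos (p x)) (Rabs_pos (q x)). intros. 
  assert (Rabs (p x) = 0) by lra. destruct (Req_dec (p x) 0) as [E|E]; auto. apply Rabs_no_R0 in E. contradiction.
Qed.

Lemma div_nonneg a b : 0 <= a -> 0 < b -> 0 <= a / b.
Proof. intros. unfold Rdiv. apply Rmult_le_pos; auto. left; apply Rinv_0_lt_compat; auto. Qed.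

Lemma fermat_max f l c : derivable_pt_lim f c l -> (forall x, f x <= f c) -> l = 0.
Proof.
  intros Hd Hm. destruct (Rtotal_order l 0) as [H|[H|H]]; auto; exfalso.
  - destruct (Hd (-l) ltac:(lra)) as [d Hdl].
    assert (Hd0 := cond_pos d).
    assert (Hh : - (d/2) <> 0) by lra.
    assert (Ha : Rabs (- (d/2)) < d) by (rewrite Rabs_Ropp, Rabs_right; lra).
    specialize (Hdl _ Hh Ha). specialize (Hm (c + - (d/2))).
    apply Rabs_def2 in Hdl. destruct Hdl as [Hdl _].
    assert (Q : (f (c + - (d / 2)) - f c) / - (d / 2) >= 0).
    { replace ((f (c + - (d / 2)) - f c) / - (d / 2)) with ((f c - f (c + - (d / 2))) / (d / 2)) by (field; lra).
      apply Rle_ge, div_nonneg; lra. }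
    lra.
  - destruct (Hd l ltac:(lra)) as [d Hdl].
    assert (Hd0 := cond_pos d).
    assert (Hh : (d/2) <> 0) by lra.
    assert (Ha : Rabs (d/2) < d) by (rewrite Rabs_right; lra).
    specialize (Hdl _ Hh Ha). specialize (Hm (c + (d/2))).
    apply Rabs_def2 in Hdl. destruct Hdl as [_ Hdl].
    assert (Q : (f (c + (d / 2)) - f c) / (d / 2) <= 0).
    { replace ((f (c + (d / 2)) - f c) / (d / 2)) with (- ((f c - f (c + (d / 2))) / (d / 2))) by (field; lra).
      assert (0 <= (f c - f (c + (d / 2))) / (d / 2)) by (apply div_nonneg; lra). lra. }
    lra.
Qed.

Lemma fermat_min f l c : derivable_pt_lim f c l -> (forall x, f c <= f x) -> l = 0.
Proof.
  intros Hd Hm. assert (H := derivable_pt_lim_opp f c l Hd).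
  assert (- l = 0). { apply (fermat_max _ _ c H). intro x. unfold opp_fct. specialize (Hm x). lra. }
  lra.
Qed.

Lemma const_deriv f l a b : a < b -> (forall y, a <= y <= b -> f y = f b) ->
  derivable_pt_lim f b l -> l = 0.
Proof.
  intros Hab Hc Hd. destruct (Req_dec l 0) as [|Hl]; auto; exfalso.
  assert (Hpl : 0 < Rabs l) by (apply Rabs_pos_lt; auto).
  destruct (Hd (Rabs l) Hpl) as [d Hdl].
  assert (Hd0 := cond_pos d).
  set (h := - Rmin (d/2) (b - a)).
  assert (H1 : Rmin (d/2) (b-a) <= d/2) by apply Rmin_l.
  assert (H2 : Rmin (d/2) (b-a) <= b - a) by apply Rmin_r.
  assert (H3 : 0 < Rmin (d/2) (b-a)) by (apply Rmin_pos; lra).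
  assert (Hh : h <> 0) by (unfold h; lra).
  assert (Ha : Rabs h < d) by (unfold h; rewrite Rabs_Ropp, Rabs_right; lra).
  specialize (Hdl _ Hh Ha).
  rewrite (Hc (b + h)) in Hdl by (unfold h; lra).
  replace ((f b - f b) / h - l) with (- l) in Hdl by (field; auto).
  rewrite Rabs_Ropp in Hdl. lra.
Qed.

Lemma cont_eps f x : continuity_pt f x -> forall eps, 0 < eps ->
  exists d, 0 < d /\ forall y, Rabs (y - x) < d -> Rabs (f y - f x) < eps.
Proof.
  intros Hc eps He. destruct (Hc eps He) as [d [Hd H]].
  exists d. split; auto. intros y Hy.
  destruct (Req_dec y x) as [->|Hne].
  - rewrite Rminus_diag, Rabs_R0; auto.
  - apply (H y). split. split. exact I. auto. exact Hy.
Qed.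

Lemma mono_of (w w1 : R -> R) : (forall x, derivable_pt_lim w x (w1 x)) ->
  (forall x, w1 x <= 0) -> forall x y, x <= y -> w y <= w x.
Proof.
  intros Hw Hn x y Hxy. destruct (Req_dec x y) as [->|Hne]. lra.
  destruct (MVT_cor2 w w1 x y ltac:(lra) (fun c _ => Hw c)) as [z [E _]].
  specialize (Hn z). nra.
Qed.

Lemma bounds_of (w : R -> R) : (forall x y, x <= y -> w y <= w x) ->
  lim_minfty w 1 -> lim_pinfty w 0 -> forall x, 0 <= w x <= 1.
Proof.
  intros Hm Hl Hp x. split.
  - destruct (Rle_dec 0 (w x)) as [|H]; auto. exfalso.
    destruct (Hp (- w x) ltac:(lra)) as [M HM].
    specialize (HM (Rmax M x) (Rle_ge _ _ (Rmax_l M x))).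
    specialize (Hm x (Rmax M x) (Rmax_r M x)).
    apply Rabs_def2 in HM. lra.
  - destruct (Rle_dec (w x) 1) as [|H]; auto. exfalso.
    destruct (Hl (w x - 1) ltac:(lra)) as [M HM].
    specialize (HM (Rmin M x) (Rmin_l M x)).
    specialize (Hm (Rmin M x) x (Rmin_r M x)).
    apply Rabs_def2 in HM. lra.
Qed.

Lemma lip_of (f f1 : R -> R) B : (forall x, derivable_pt_lim f x (f1 x)) ->
  (forall x, Rabs (f1 x) <= B) -> forall u v, Rabs (f u - f v) <= B * Rabs (u - v).
Proof.
  intros Hd HB u v. destruct (Req_dec u v) as [->|Hne].
  - rewrite !Rminus_diag, Rabs_R0. specialize (HB v). generalize (Rabs_pos (f1 v)). lra.
  - destruct (Rlt_or_le u v) as [H|H].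
    + destruct (MVT_cor2 f f1 u v H (fun c _ => Hd c)) as [z [E _]].
      rewrite <- Rabs_Ropp, Ropp_minus_distr, E, Rabs_mult, <- (Rabs_Ropp (u - v)), Ropp_minus_distr.
      apply Rmult_le_compat_r; auto using Rabs_pos.
    + destruct (MVT_cor2 f f1 v u ltac:(lra) (fun c _ => Hd c)) as [z [E _]].
      rewrite E, Rabs_mult.
      apply Rmult_le_compat_r; auto using Rabs_pos.
Qed.

Lemma above_line (f f1 : R -> R) w0 : (forall x, derivable_pt_lim f x (f1 x)) ->
  f 0 > 1 -> 0 < w0 < 1 -> (forall u, 0 < u < 1 -> f u = 1 - u -> u = w0) ->
  forall u, 0 <= u < w0 -> f u > 1 - u.
Proof.
  intros Hd H0 Hw0 Hu u Hu0.
  destruct (Rlt_or_le (1 - u) (f u)) as [|Hle]; auto. exfalso.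
  destruct Hle as [Hlt|Heq].
  - set (g := fun x => 1 - x - f x).
    assert (Hg : continuity g).
    { intro x. unfold g. apply (continuity_pt_minus (fun x => 1 - x) f).
      apply (continuity_pt_minus (fun _ => 1) id). apply continuity_pt_const; intros a b; auto. apply derivable_continuous_pt; exists 1; apply derivable_pt_lim_id.
      apply derivable_continuous_pt. exists (f1 x). apply Hd. }
    assert (Hu' : 0 < u).
    { destruct (Req_dec u 0) as [->|]; lra. }
    destruct (IVT g 0 u Hg Hu' ltac:(unfold g; lra) ltac:(unfold g; lra)) as [z [Hz Ez]].
    unfold g in Ez.
    assert (z <> 0) by (intro; subst; lra).
    assert (z = w0) by (apply Hu; lra). lra.
  - assert (Hu' : 0 < u).
    { destruct (Req_dec u 0) as [->|]; lra. }
    assert (u = w0) by (apply Hu; lra). lra.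
Qed.

Lemma abs_comb a b u v : 0 <= a -> Rabs (- (a * b) - u * v) <= a * Rabs b + Rabs u * Rabs v.
Proof.
  intro Ha. unfold Rminus. eapply Rle_trans. apply Rabs_triang.
  rewrite !Rabs_Ropp, !Rabs_mult, (Rabs_right a) by lra. lra.
Qed.

Lemma f_bound (f : R -> R) B : 0 <= B -> (forall u v, Rabs (f u - f v) <= B * Rabs (u - v)) ->
  forall u v, 0 <= u <= 1 -> 0 <= v <= 1 -> Rabs (1 - v - f u) <= 2 + Rabs (f 0) + B.
Proof.
  intros HB Hl u v Hu Hv. specialize (Hl u 0). rewrite Rminus_0_r, (Rabs_right u) in Hl by lra.
  replace (1 - v - f u) with ((1 - v) - (f u - f 0) - f 0) by ring.
  unfold Rminus. eapply Rle_trans. apply Rabs_triang. rewrite Rabs_Ropp.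
  eapply Rle_trans. apply Rplus_le_compat_r. apply Rabs_triang. rewrite Rabs_Ropp.
  rewrite (Rabs_right (1 + - v)) by lra.
  assert (Rabs (f u - f 0) <= B) by nra. unfold Rminus in *. lra.
Qed.

Lemma noZero (f w w1 w2 : R -> R) c tau B :
  (forall x, derivable_pt_lim w x (w1 x)) ->
  (forall x, derivable_pt_lim w1 x (w2 x)) ->
  (forall x, w2 x + c * w1 x + w x * (1 - w x - f (w (x + c * tau))) = 0) ->
  (forall x y, x <= y -> w y <= w x) ->
  (forall x, 0 <= w x <= 1) ->
  0 <= c -> 0 <= B -> (forall u v, Rabs (f u - f v) <= B * Rabs (u - v)) ->
  lim_minfty w 1 ->
  forall x0, w x0 = 0 -> False.
Proof.
  intros Hw Hw1 Heq Hmon Hb Hc HB Hlip Hlm x0 Hx0.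
  set (E := fun x => w x > 0).
  assert (HbE : bound E).
  { exists x0. intros x Hx. unfold E in Hx. destruct (Rle_dec x x0) as [|H]; auto.
    specialize (Hmon x0 x ltac:(lra)). lra. }
  assert (HnE : exists x, E x).
  { destruct (Hlm (1/2) ltac:(lra)) as [M HM]. exists M. unfold E.
    specialize (HM M (Rle_refl M)). apply Rabs_def2 in HM. lra. }
  destruct (completeness E HbE HnE) as [s [Hub Hleast]].
  assert (Hi : forall x, x < s -> w x > 0).
  { intros x Hx. destruct (Rlt_or_le 0 (w x)) as [|Hle]; auto. exfalso.
    assert (s <= x); [|lra]. apply Hleast. intros y Hy. unfold E in Hy.
    destruct (Rle_dec y x) as [|H]; auto. specialize (Hmon x y ltac:(lra)). lra. }
  assert (Hii : forall x, x > s -> w x = 0).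
  { intros x Hx. destruct (Rlt_or_le 0 (w x)) as [H|H].
    - specialize (Hub x H). lra.
    - specialize (Hb x). lra. }
  assert (Hiii : w s = 0).
  { destruct (Rlt_or_le 0 (w s)) as [H|H]; [|specialize (Hb s); lra]. exfalso.
    destruct (cont_eps w s (dcont w w1 s (Hw s)) (w s) H) as [d [Hd Hd']].
    specialize (Hd' (s + d/2)). rewrite (Hii (s + d/2)) in Hd' by lra.
    assert (Rabs (s + d/2 - s) < d) by (rewrite Rabs_right; lra).
    specialize (Hd' H0). rewrite Rabs_left in Hd' by lra. lra. }
  assert (Hiv : w1 s = 0).
  { apply (fermat_min w _ s (Hw s)). intro x. rewrite Hiii. apply Hb. }
  set (K := c + (2 + Rabs (f 0) + B)).
  assert (HK : 0 <= K) by (unfold K; generalize (Rabs_pos (f 0)); lra).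
  set (d := / (2 * (1 + K))).
  assert (Hd : 0 < d) by (unfold d; apply Rinv_0_lt_compat; lra).
  assert (Hd2 : d * (1 + K) = 1/2) by (unfold d; field; lra).
  assert (Hu := uniq_loc w w1 w2 (s - d) s s K ltac:(lra) HK ltac:(lra) Hw Hw1).
  assert (Hr : forall x, s - d <= x <= s -> Rabs (w2 x) <= K * (Rabs (w x) + Rabs (w1 x))).
  { intros x _. replace (w2 x) with (- (c * w1 x) - w x * (1 - w x - f (w (x + c * tau)))) by (specialize (Heq x); lra).
    eapply Rle_trans. apply abs_comb; auto.
    assert (HA := f_bound f B HB Hlip (w (x + c * tau)) (w x) (Hb _) (Hb _)).
    fold K in HA. generalize (Rabs_pos (w x)) (Rabs_pos (w1 x)) (Rabs_pos (1 - w x - f (w (x + c * tau)))). intros.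
    unfold K. nra. }
  assert (Hz := Hu Hr Hiii Hiv (s - d) ltac:(lra)).
  specialize (Hi (s - d) ltac:(lra)). lra.
Qed.

Lemma noEquil (f w w1 w2 : R -> R) c tau B e :
  (forall x, derivable_pt_lim w x (w1 x)) ->
  (forall x, derivable_pt_lim w1 x (w2 x)) ->
  (forall x, w2 x + c * w1 x + w x * (1 - w x - f (w (x + c * tau))) = 0) ->
  (forall x y, x <= y -> w y <= w x) ->
  (forall x, 0 <= w x <= 1) ->
  0 <= c -> 0 <= B -> (forall u v, Rabs (f u - f v) <= B * Rabs (u - v)) ->
  lim_pinfty w 0 -> c * tau = 0 -> 0 < e <= 1 -> f e = 1 - e ->
  forall x0, w x0 = e -> w1 x0 = 0 -> False.
Proof.
  intros Hw Hw1 Heq Hmon Hb Hc HB Hlip Hlp Hct He Hfe x0 Hx0 Hx0'.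
  set (E := fun x => w x >= e).
  assert (HbE : bound E).
  { destruct (Hlp (e/2) ltac:(lra)) as [M HM]. exists M. intros x Hx. unfold E in Hx.
    destruct (Rle_dec x M) as [|H]; auto. specialize (HM x ltac:(lra)).
    apply Rabs_def2 in HM. lra. }
  assert (HnE : exists x, E x) by (exists x0; unfold E; lra).
  destruct (completeness E HbE HnE) as [t [Hub Hleast]].
  assert (Hx0t : x0 <= t) by (apply Hub; unfold E; lra).
  assert (Hi : forall x, x < t -> w x >= e).
  { intros x Hx. destruct (Rle_or_lt e (w x)) as [|Hle]; [lra|]. exfalso.
    assert (t <= x); [|lra]. apply Hleast. intros y Hy. unfold E in Hy.
    destruct (Rle_dec y x) as [|H]; auto. specialize (Hmon x y ltac:(lra)). lra. }
  assert (Hii : forall x, x > t -> w x < e).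
  { intros x Hx. destruct (Rle_or_lt e (w x)) as [H|H]; auto.
    specialize (Hub x ltac:(unfold E; lra)). lra. }
  assert (Hiii : w t = e).
  { assert (w t <= e) by (rewrite <- Hx0; apply Hmon; auto).
    destruct (Rlt_or_le (w t) e) as [H'|H']; [|lra]. exfalso.
    destruct (cont_eps w t (dcont w w1 t (Hw t)) (e - w t) ltac:(lra)) as [d [Hd Hd']].
    specialize (Hd' (t - d/2)). specialize (Hi (t - d/2) ltac:(lra)).
    assert (Rabs (t - d/2 - t) < d) by (rewrite Rabs_left; lra).
    specialize (Hd' H0). apply Rabs_def2 in Hd'. lra. }
  assert (Hiv : w1 t = 0).
  { destruct (Req_dec x0 t) as [<-|Hne]; auto.
    apply (const_deriv w _ x0 t ltac:(lra)); [|apply Hw].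
    intros y Hy. rewrite Hiii. destruct (Req_dec y t) as [->|]; auto.
    specialize (Hi y ltac:(lra)). specialize (Hmon x0 y ltac:(lra)). lra. }
  set (K := c + ((2 + Rabs (f 0) + B) + (1 + B))).
  assert (HK : 0 <= K) by (unfold K; generalize (Rabs_pos (f 0)); lra).
  set (d := / (2 * (1 + K))).
  assert (Hd : 0 < d) by (unfold d; apply Rinv_0_lt_compat; lra).
  assert (Hd2 : d * (1 + K) = 1/2) by (unfold d; field; lra).
  set (p := fun x => w x - e).
  assert (Hp : forall x, derivable_pt_lim p x (w1 x)).
  { intro x. unfold p. replace (w1 x) with (w1 x - 0) by ring.
    apply (derivable_pt_lim_minus w (fun _ => e)). apply Hw. apply derivable_pt_lim_const. }
  assert (Hu := uniq_loc p w1 w2 t (t + d) t K ltac:(lra) HK ltac:(lra) Hp Hw1).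
  assert (Hr : forall x, t <= x <= t + d -> Rabs (w2 x) <= K * (Rabs (p x) + Rabs (w1 x))).
  { intros x _. unfold p. assert (Heqx := Heq x). rewrite Hct, Rplus_0_r in Heqx.
    replace (w2 x) with (- (c * w1 x) - (w x - e) * (1 - w x - f (w x)) - e * ((e - w x) + (f e - f (w x)))) by (rewrite Hfe; nra).
    unfold Rminus at 1. eapply Rle_trans. apply Rabs_triang.
    rewrite Rabs_Ropp. 
    assert (HA := abs_comb c (w1 x) (w x - e) (1 - w x - f (w x)) Hc).
    assert (HF := f_bound f B HB Hlip (w x) (w x) (Hb _) (Hb _)).
    assert (HL := Hlip e (w x)).
    assert (Rabs (e * ((e - w x) + (f e - f (w x)))) <= (1 + B) * Rabs (w x - e)).
    { rewrite Rabs_mult, (Rabs_right e) by lra.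
      assert (Rabs ((e - w x) + (f e - f (w x))) <= (1 + B) * Rabs (w x - e)).
      { eapply Rle_trans. apply Rabs_triang. rewrite <- (Rabs_Ropp (w x - e)), Ropp_minus_distr. lra. }
      generalize (Rabs_pos ((e - w x) + (f e - f (w x)))). nra. }
    generalize (Rabs_pos (w x - e)) (Rabs_pos (w1 x)) (Rabs_pos (1 - w x - f (w x))). intros.
    unfold K. nra. }
  assert (Hz := Hu Hr ltac:(unfold p; lra) Hiv (t + d) ltac:(lra)).
  specialize (Hii (t + d) ltac:(lra)). unfold p in Hz. lra.
Qed.

Lemma noOne (f w w1 w2 : R -> R) c tau B :
  (forall x, derivable_pt_lim w x (w1 x)) ->
  (forall x, derivable_pt_lim w1 x (w2 x)) ->
  (forall x, w2 x + c * w1 x + w x * (1 - w x - f (w (x + c * tau))) = 0) ->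
  (forall x y, x <= y -> w y <= w x) ->
  (forall x, 0 <= w x <= 1) -> (forall x, w1 x <= 0) ->
  0 <= c -> 0 <= tau -> 0 <= B -> (forall u v, Rabs (f u - f v) <= B * Rabs (u - v)) ->
  (forall u, 0 <= u < 1 -> f u > 0) -> f 1 = 0 ->
  lim_pinfty w 0 ->
  forall x0, w x0 = 1 -> False.
Proof.
  intros Hw Hw1 Heq Hmon Hb Hneg Hc Ht HB Hlip Hfp Hf1 Hlp x0 Hx0.
  set (E := fun x => w x >= 1).
  assert (HbE : bound E).
  { destruct (Hlp (1/2) ltac:(lra)) as [M HM]. exists M. intros x Hx. unfold E in Hx.
    destruct (Rle_dec x M) as [|H]; auto. specialize (HM x ltac:(lra)).
    apply Rabs_def2 in HM. lra. }
  assert (HnE : exists x, E x) by (exists x0; unfold E; lra).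
  destruct (completeness E HbE HnE) as [t [Hub Hleast]].
  assert (Hii : forall x, x > t -> w x < 1).
  { intros x Hx. destruct (Rle_or_lt 1 (w x)) as [H|H]; auto.
    specialize (Hub x ltac:(unfold E; lra)). lra. }
  assert (Hx0t : x0 <= t) by (apply Hub; unfold E; lra).
  assert (Hiii : w t = 1).
  { assert (w t <= 1) by apply Hb.
    destruct (Rlt_or_le (w t) 1) as [H'|H']; [|lra]. exfalso.
    assert (Hi : forall x, x < t -> w x >= 1).
    { intros x Hx. destruct (Rle_or_lt 1 (w x)) as [|Hle]; [lra|]. exfalso.
      assert (t <= x); [|lra]. apply Hleast. intros y Hy. unfold E in Hy.
      destruct (Rle_dec y x) as [|Hn]; auto. specialize (Hmon x y ltac:(lra)). lra. }
    destruct (cont_eps w t (dcont w w1 t (Hw t)) (1 - w t) ltac:(lra)) as [d [Hd Hd']].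
    specialize (Hd' (t - d/2)). specialize (Hi (t - d/2) ltac:(lra)).
    assert (Rabs (t - d/2 - t) < d) by (rewrite Rabs_left; lra).
    specialize (Hd' H0). apply Rabs_def2 in Hd'. lra. }
  assert (Hiv : w1 t = 0).
  { apply (fermat_max w _ t (Hw t)). intro x. rewrite Hiii. apply Hb. }
  destruct (Req_dec (c * tau) 0) as [Hct|Hct].
  - apply (noEquil f w w1 w2 c tau B 1 Hw Hw1 Heq Hmon Hb Hc HB Hlip Hlp Hct ltac:(lra) ltac:(lra) t Hiii Hiv).
  - assert (Hv : w2 t = 0).
    { apply (fermat_max w1 _ t (Hw1 t)). intro x. rewrite Hiv. apply Hneg. }
    assert (Hf0 : f (w (t + c * tau)) = 0).
    { specialize (Heq t). rewrite Hv, Hiv, Hiii in Heq. lra. }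
    assert (Hct' : 0 < c * tau) by (assert (0 <= c * tau) by (apply Rmult_le_pos; auto); lra).
    specialize (Hii (t + c * tau) ltac:(lra)).
    specialize (Hfp (w (t + c * tau)) ltac:(split; [apply Hb| auto])). lra.
Qed.

Lemma max_second (w1 w2 : R -> R) x0 D :
  (forall z, derivable_pt_lim w1 z (w2 z)) -> (forall x, w1 x <= w1 x0) ->
  w2 x0 = 0 -> derivable_pt_lim w2 x0 D -> D <= 0.
Proof.
  intros Hd Hm H0 HD. destruct (Rle_or_lt D 0) as [|HDp]; auto. exfalso.
  destruct (HD D HDp) as [d Hdl]. assert (Hd0 := cond_pos d).
  assert (Hpos : forall h, 0 < h < d -> w2 (x0 + h) > 0).
  { intros h Hh. assert (h <> 0) by lra. assert (Rabs h < d) by (rewrite Rabs_right; lra).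
    specialize (Hdl h H H1). rewrite H0, Rminus_0_r in Hdl. apply Rabs_def2 in Hdl.
    destruct Hdl as [_ Hdl].
    assert (0 < w2 (x0 + h) / h) by lra.
    destruct (Rle_or_lt (w2 (x0 + h)) 0) as [Hn|]; auto.
    assert (w2 (x0 + h) / h <= 0).
    { unfold Rdiv. replace (w2 (x0 + h) * / h) with (- ((- w2 (x0 + h)) * / h)) by ring.
      assert (0 <= (- w2 (x0 + h)) * / h); [|lra].
      apply Rmult_le_pos; [lra|]. left; apply Rinv_0_lt_compat; lra. }
    lra. }
  destruct (MVT_cor2 w1 w2 x0 (x0 + d/2) ltac:(lra) (fun c _ => Hd c)) as [z [E Hz]].
  specialize (Hpos (z - x0) ltac:(lra)). replace (x0 + (z - x0)) with z in Hpos by ring.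
  specialize (Hm (x0 + d/2)). nra.
Qed.

Lemma dpl_eq g x l l' : derivable_pt_lim g x l -> l = l' -> derivable_pt_lim g x l'.
Proof. intros H ->; exact H. Qed.

Lemma step (f f1 w w1 w2 : R -> R) c tau w0 :
  (forall x, derivable_pt_lim f x (f1 x)) ->
  (forall x, derivable_pt_lim w x (w1 x)) ->
  (forall x, derivable_pt_lim w1 x (w2 x)) ->
  (forall x, w2 x + c * w1 x + w x * (1 - w x - f (w (x + c * tau))) = 0) ->
  (forall x y, x <= y -> w y <= w x) ->
  (forall x, 0 < w x < 1) -> (forall x, w1 x <= 0) ->
  0 < c * tau ->
  (forall u, w0 <= u < 1 -> f1 u < 0) ->
  (forall u, 0 <= u < w0 -> f u > 1 - u) ->
  forall x, w1 x = 0 -> w1 (x + c * tau) = 0 /\ w0 <= w (x + c * tau).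
Proof.
  intros Hfd Hw Hw1 Heq Hmon Hb Hneg Hct Hm1 Hab x Hx.
  assert (Hv : w2 x = 0).
  { apply (fermat_max w1 _ x (Hw1 x)). intro y. rewrite Hx. apply Hneg. }
  set (a := w x). set (b := w (x + c * tau)).
  assert (Hfb : f b = 1 - a).
  { specialize (Heq x). fold a b in Heq. rewrite Hv, Hx in Heq.
    assert (Ha : 0 < a) by (apply Hb).
    assert (a * (1 - a - f b) = 0) by lra.
    apply Rmult_integral in H. destruct H; lra. }
  assert (Hba : b <= a) by (apply Hmon; lra).
  assert (Hbw0 : w0 <= b).
  { destruct (Rle_or_lt w0 b) as [|Hl]; auto. exfalso.
    specialize (Hab b ltac:(split; [left; apply Hb|lra])). lra. }
  split; auto.
  assert (Hf1b : f1 b < 0) by (apply Hm1; split; auto; apply Hb).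
  assert (E2 : w2 = fun y => (- c) * w1 y - w y * (1 - w y - f (w (y + c * tau)))).
  { apply functional_extensionality. intro y. specialize (Heq y). lra. }
  assert (d1 : derivable_pt_lim (fun y => y + c * tau) x 1).
  { apply (dpl_eq _ _ (1 + 0)); [|ring].
    exact (derivable_pt_lim_plus id (fun _ => c * tau) x 1 0 (derivable_pt_lim_id x) (derivable_pt_lim_const _ x)). }
  assert (d2 : derivable_pt_lim (fun y => w (y + c * tau)) x (w1 (x + c * tau) * 1)).
  { exact (derivable_pt_lim_comp (fun y => y + c * tau) w x 1 _ d1 (Hw _)). }
  assert (d3 : derivable_pt_lim (fun y => f (w (y + c * tau))) x (f1 b * (w1 (x + c * tau) * 1))).
  { exact (derivable_pt_lim_comp (fun y => w (y + c * tau)) f x _ _ d2 (Hfd _)). }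
  assert (d4 : derivable_pt_lim (fun y => 1 - w y - f (w (y + c * tau))) x (0 - w1 x - f1 b * (w1 (x + c * tau) * 1))).
  { exact (derivable_pt_lim_minus (fun y => 1 - w y) (fun y => f (w (y + c * tau))) x _ _
      (derivable_pt_lim_minus (fun _ => 1) w x _ _ (derivable_pt_lim_const _ x) (Hw x)) d3). }
  assert (d5 : derivable_pt_lim (fun y => w y * (1 - w y - f (w (y + c * tau)))) x
     (w1 x * (1 - w x - f (w (x + c * tau))) + w x * (0 - w1 x - f1 b * (w1 (x + c * tau) * 1)))).
  { exact (derivable_pt_lim_mult w (fun y => 1 - w y - f (w (y + c * tau))) x _ _ (Hw x) d4). }
  assert (d6 : derivable_pt_lim w2 x ((- c) * w2 x - (w1 x * (1 - w x - f (w (x + c * tau))) + w x * (0 - w1 x - f1 b * (w1 (x + c * tau) * 1))))).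
  { rewrite E2 at 1.
    exact (derivable_pt_lim_minus (fun y => (- c) * w1 y) (fun y => w y * (1 - w y - f (w (y + c * tau)))) x _ _
      (derivable_pt_lim_scal w1 (- c) x _ (Hw1 x)) d5). }
  assert (HD := max_second w1 w2 x _ Hw1 ltac:(intro y; rewrite Hx; apply Hneg) Hv d6).
  rewrite Hv, Hx in HD. fold a in HD.
  assert (Ha : 0 < a) by apply Hb.
  assert (Hn := Hneg (x + c * tau)).
  destruct (Rle_or_lt 0 (w1 (x + c * tau))) as [H|H]; [lra|].
  assert (0 < a * (- f1 b) * (- w1 (x + c * tau))) by (apply Rmult_lt_0_compat; [apply Rmult_lt_0_compat|]; lra).
  nra.
Qed.

Lemma nat_above r : exists n : nat, r < INR n.
Proof.
  destruct (Rle_or_lt r 0) as [H|H].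
  - exists 1%nat. simpl. lra.
  - destruct (archimed r) as [H1 _].
    assert (Hz : (0 < up r)%Z) by (apply lt_0_IZR; lra).
    exists (Z.to_nat (up r)). rewrite INR_IZR_INZ, Z2Nat.id by lia. lra.
Qed.

Theorem lemma3p1 (f f1 f2 f3 f4 : R -> R) (wstar w0 tau c : R)
  (w w1 w2 : R -> R)
  (Hf : C4_bounded_derivs f f1 f2 f3 f4)
  (HF1a : forall u, 0 <= u < 1 -> f u > 0)
  (HF1b : f 1 = 0)
  (HF1c : f1 1 > -1)
  (HF2a : f 0 > 1)
  (HF2b : f1 0 > 0)
  (HF2c : 0 < wstar < 1)
  (HF2d : forall u, 0 <= u < wstar -> f u > 1)
  (HF3a : 0 < w0 < 1)
  (HF3b : f w0 = 1 - w0)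
  (HF3c : forall u, 0 < u < 1 -> f u = 1 - u -> u = w0)
  (HF3d : f1 w0 < -1)
  (Htau : 0 <= tau)
  (Hc : 0 <= c)
  (Hmono : forall u, w0 <= u < 1 -> f1 u < 0)
  (HP : solves_P f tau c w w1 w2)
  (Hnonincr : forall x, w1 x <= 0) :
  forall x, w1 x < 0.
Proof.
  destruct Hf as [Hfd [_ [_ [_ [_ [[B HB] _]]]]]].
  destruct HP as [[Hw [Hw1 _]] [Heq [Hlm Hlp]]].
  assert (HB0 : 0 <= B) by (specialize (HB 0); generalize (Rabs_pos (f1 0)); lra).
  assert (Hlip := lip_of f f1 B Hfd HB).
  assert (Hmon := mono_of w w1 Hw Hnonincr).
  assert (Hb := bounds_of w Hmon Hlm Hlp).
  assert (Hb' : forall x, 0 < w x < 1).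
  { intro x. destruct (Hb x) as [H1 H2]. split.
    - destruct H1 as [|H1]; auto. exfalso. apply (noZero f w w1 w2 c tau B Hw Hw1 Heq Hmon Hb Hc HB0 Hlip Hlm x); auto.
    - destruct H2 as [|H2]; auto. exfalso. apply (noOne f w w1 w2 c tau B Hw Hw1 Heq Hmon Hb Hnonincr Hc Htau HB0 Hlip HF1a HF1b Hlp x); auto. }
  intro x. destruct (Hnonincr x) as [|Hx]; auto. exfalso.
  assert (Hab := above_line f f1 w0 Hfd HF2a HF3a HF3c).
  destruct (Req_dec (c * tau) 0) as [Hct|Hct].
  - assert (Hv : w2 x = 0).
    { apply (fermat_max w1 _ x (Hw1 x)). intro y. rewrite Hx. apply Hnonincr. }
    assert (Hfx : f (w x) = 1 - w x).
    { specialize (Heq x). rewrite Hct, Rplus_0_r, Hv, Hx in Heq.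
      assert (Ha : 0 < w x) by apply Hb'.
      assert (w x * (1 - w x - f (w x)) = 0) by lra.
      apply Rmult_integral in H. destruct H; lra. }
    assert (Hxw : w x = w0) by (apply HF3c; auto).
    apply (noEquil f w w1 w2 c tau B w0 Hw Hw1 Heq Hmon Hb Hc HB0 Hlip Hlp Hct ltac:(lra) HF3b x Hxw Hx).
  - assert (Hct' : 0 < c * tau) by (assert (0 <= c * tau) by (apply Rmult_le_pos; auto); lra).
    assert (Hst := step f f1 w w1 w2 c tau w0 Hfd Hw Hw1 Heq Hmon Hb' Hnonincr Hct' Hmono Hab).
    assert (Hind : forall n : nat, w1 (x + INR (S n) * (c * tau)) = 0 /\ w0 <= w (x + INR (S n) * (c * tau))).
    { induction n as [|n IH].
      - simpl. rewrite Rmult_1_l. apply Hst; auto.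
      - rewrite S_INR. replace (x + (INR (S n) + 1) * (c * tau)) with ((x + INR (S n) * (c * tau)) + c * tau) by ring.
        apply Hst. apply IH. }
    destruct (Hlp w0 ltac:(lra)) as [M HM].
    destruct (nat_above ((M - x) / (c * tau))) as [n Hn].
    assert (HM' : x + INR (S n) * (c * tau) >= M).
    { rewrite S_INR. assert ((M - x) / (c * tau) * (c * tau) = M - x) by (unfold Rdiv; rewrite Rmult_assoc, Rinv_l, Rmult_1_r; lra).
      assert ((M - x) / (c * tau) * (c * tau) <= INR n * (c * tau)) by (apply Rmult_le_compat_r; lra).
      nra. }
    specialize (HM _ HM'). destruct (Hind n) as [_ Hn2].
    rewrite Rminus_0_r in HM. apply Rabs_def2 in HM. lra.
Qed.
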